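(* Let $K$ be a number field. Let $\mathcal C_K$ be the set of compositum feasible triplets over $K$ and let $\mathcal C'_K$ be the set of triplets of positive integers $(a,b,c)$ with $c=\mathrm{lcm}(a,b)\cdot t$ for some positive integer $t\mid\gcd(a,b)$. (1) If $(a,b,c),(a',b',c')\in\mathcal C_K$ and $(a,b,c)\in\mathcal C'_K$, then $(aa',bb',cc')\in\mathcal C_K$. (2) $\mathcal C'_K\subseteq\mathcal C_K$, and $\mathcal C'_K$ is a commutative monoid under componentwise multiplication (with identity $(1,1,1)$). In particular, if $(a,b,c)\in\mathcal C'_K$ then $(a^n,b^n,c^n)\in\mathcal C'_K$ for every $n\in\mathbb N$.
   Context: Extensions are finite and inside a fixed algebraic closure $\bar K$. A triplet $(a,b,c)$ of positive integers is compositum feasible over $K$ if there exist extensions $L/K$, $L'/K$ of degrees $a$ and $b$ whose compositum $LL'$ has degree $c$ over $K$. *)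

(* Defs.v *)
From HB Require Import structures.
From mathcomp Require Import all_boot all_order all_algebra all_field.
Set Implicit Arguments. Unset Strict Implicit. Unset Printing Implicit Defensive.
Import GRing.Theory.

Notation numberField := (fieldExtType rat).

(* (a,b,c) is compositum feasible over K: there are finite extensions L, L'
   of K (inside a common finite extension E of K, equivalently inside a fixed
   algebraic closure) with [L:K] = a, [L':K] = b and [LL':K] = c. *)
Definition compositum_feasible (K : fieldType) (a b c : nat) : Prop :=
  exists (E : fieldExtType K) (L L' : {subfield E}),
    [/\ \dim L = a, \dim L' = b & \dim (L * L')%AS = c].

Definition Cprime (a b c : nat) : Prop :=
  [/\ 0 < a, 0 < b, 0 < c &
      exists t : nat, [/\ 0 < t, t %| gcdn a b & c = lcmn a b * t]]%N.

(* Main.v *)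
Require Import Defs.
From HB Require Import structures.
From mathcomp Require Import all_boot all_order all_algebra all_field.
Set Implicit Arguments. Unset Strict Implicit. Unset Printing Implicit Defensive.
Import GRing.Theory Num.Theory.
From mathcomp Require Import ring zify.
From Stdlib Require Import Classical.

Section Kum1.
Local Open Scope ring_scope.
Variables (F0 : fieldType) (L : fieldExtType F0).

Lemma Xn_sub_prod (q : nat) (z w : L) : q.-primitive_root z -> w != 0 ->
  'X^q - (w ^+ q)%:P = \prod_(i <- iota 0 q) ('X - (z ^+ i * w)%:P).
Proof.
move=> pz w0; have q0 := prim_order_gt0 pz.
rewrite -(big_map (fun i => z ^+ i * w) xpredT (fun x => 'X - x%:P)).
rewrite [LHS](@all_roots_prod_XsubC _ _ [seq z ^+ i * w | i <- iota 0 q]).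
- by rewrite (monicP (monicXnsubC _ q0)) scale1r.
- by rewrite size_XnsubC // size_map size_iota.
- apply/allP=> _ /mapP[i _ ->] /=; rewrite rootE !hornerE.
  by rewrite exprMn exprAC (prim_expr_order pz) expr1n mul1r subrr.
rewrite uniq_rootsE map_inj_in_uniq ?iota_uniq // => i j.
rewrite !mem_iota !add0n => /andP[_ ltiq] /andP[_ ltjq] /(mulIf w0) /eqP.
by rewrite (eq_prim_root_expr pz) !modn_small // => /eqP.
Qed.

Lemma const_min (F : {subfield L}) q z w : q.-primitive_root z -> w != 0 ->
  w ^+ q \in F -> exists s, z ^+ s * w ^+ (adjoin_degree F w) \in F.
Proof.
move=> pz w0 wqF.
have dv : minPoly F w %| 'X^q - (w ^+ q)%:P.
  apply: minPoly_dvdp; first by rewrite rpredB ?rpredX ?polyOverX ?polyOverC.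
  by rewrite rootE !hornerE subrr.
rewrite (Xn_sub_prod pz w0) in dv; have [m Dm] := dvdp_prod_XsubC dv.
set r := mask m (iota 0 q) in Dm.
have Em : minPoly F w = \prod_(i <- r) ('X - (z ^+ i * w)%:P).
  by apply/eqP; rewrite -eqp_monic ?monic_minPoly ?monic_prod_XsubC.
have szr : size r = adjoin_degree F w.
  by apply/eqP; rewrite -eqSS -(size_prod_XsubC r (fun i => z ^+ i * w)) -Em size_minPoly.
have c0F : (minPoly F w)`_0 \in F by apply/polyOverP/minPolyOver.
rewrite -horner_coef0 Em horner_prod in c0F.
exists (\sum_(i <- r) i)%N.
have -> : z ^+ (\sum_(i <- r) i) * w ^+ adjoin_degree F w =
          (-1) ^+ size r * \prod_(i <- r) ('X - (z ^+ i * w)%:P).[0].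
  rewrite -szr.
  rewrite (eq_bigr (fun i => (-1) * (z ^+ i * w))); last first.
    by move=> i _; rewrite hornerXsubC sub0r mulN1r.
  rewrite big_split /= big_split /= prodrXr !big_const_seq !count_predT !iter_mulr_1.
  by rewrite mulrA -exprMn mulN1r opprK expr1n mul1r.
by rewrite rpredM // rpredX // rpredN mem1v.
Qed.

Lemma adeg_le (F : {subfield L}) q w : (0 < q)%N -> w ^+ q \in F ->
  (adjoin_degree F w <= q)%N.
Proof.
move=> q0 wqF.
have dv : minPoly F w %| 'X^q - (w ^+ q)%:P.
  apply: minPoly_dvdp; first by rewrite rpredB ?rpredX ?polyOverX ?polyOverC.
  by rewrite rootE !hornerE subrr.
have := dvdp_leq _ dv; rewrite size_minPoly size_XnsubC // ltnS; apply.
by rewrite -size_poly_eq0 size_XnsubC.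
Qed.

Lemma adeg_q (F : {subfield L}) q z w : prime q -> q.-primitive_root z ->
  z \in F -> w != 0 -> w ^+ q \in F ->
  (forall c, c \in F -> c ^+ q != w ^+ q) -> adjoin_degree F w = q.
Proof.
move=> pq pz zF w0 wqF noroot.
have q0 := prim_order_gt0 pz.
set k := adjoin_degree F w.
have [s Hs] := const_min pz w0 wqF.
have wkF : w ^+ k \in F.
  have z0 : z != 0.
    apply/eqP => z0; move: (prim_expr_order pz); rewrite z0 expr0n gtn_eqF //.
    by move/eqP; rewrite eq_sym oner_eq0.
  have zs0 : z ^+ s != 0 by rewrite expf_neq0.
  have -> : w ^+ k = (z ^+ s)^-1 * (z ^+ s * w ^+ k) by rewrite mulKf.
  by rewrite rpredM // memvV rpredX.
have lekq : (k <= q)%N by apply: adeg_le.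
case: (ltngtP k q) => [ltkq|ltqk|//]; last by rewrite ltnNge lekq in ltqk.
exfalso.
have k0 : (0 < k)%N by [].
have co : coprime k q.
  rewrite coprime_sym prime_coprime //; apply/negP => /(dvdn_leq k0).
  by rewrite leqNgt ltkq.
case: (egcdnP q k0) => km kn Deq _.
rewrite (eqnP co) in Deq.
have wF : w \in F.
  have -> : w = (w ^+ k) ^+ km / (w ^+ q) ^+ kn.
    rewrite -!exprM mulnC Deq addn1 exprS mulrC mulnC exprM.
    by rewrite [w * _]mulrC mulKf // expf_neq0 // expf_neq0.
  by rewrite rpredM //; [exact: rpredX | rewrite memvV; exact: rpredX].
by have := noroot w wF; rewrite eqxx.
Qed.


Lemma minPoly_Xn (F : {subfield L}) q w : (0 < q)%N -> w ^+ q \in F ->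
  adjoin_degree F w = q -> minPoly F w = 'X^q - (w ^+ q)%:P.
Proof.
move=> q0 wqF dq.
have dv : minPoly F w %| 'X^q - (w ^+ q)%:P.
  apply: minPoly_dvdp; first by rewrite rpredB ?rpredX ?polyOverX ?polyOverC.
  by rewrite rootE !hornerE subrr.
apply/eqP; rewrite -eqp_monic ?monic_minPoly ?monicXnsubC //.
by rewrite -dvdp_size_eqp // size_minPoly size_XnsubC // dq.
Qed.

Lemma kummer_step (F : {subfield L}) q z w (N u : L) : prime q ->
  q.-primitive_root z -> z \in F -> w != 0 -> w ^+ q \in F ->
  adjoin_degree F w = q -> N \in F -> N != 0 -> u \in <<F; w>>%VS ->
  u ^+ q = N -> exists2 c, c \in F & exists r, (r < q)%N /\ u = c * w ^+ r.
Proof.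
move=> pq pz zF w0 wqF dq NF N0 uFw uqN.
have q0 := prim_order_gt0 pz.
set P := Fadjoin_poly F w u.
have PF : P \is a polyOver F by apply: Fadjoin_polyOver.
have szP : (size P <= q)%N by rewrite -dq size_Fadjoin_poly.
have Pw : P.[w] = u by apply: Fadjoin_poly_eq.
have u0 : u != 0 by apply: contra_neq N0 => u0; rewrite -uqN u0 expr0n gtn_eqF.
have PzwN : P.[z * w] ^+ q = N.
  have dv : minPoly F w %| P ^+ q - N%:P.
    apply: minPoly_dvdp; first by rewrite rpredB ?rpredX ?polyOverC.
    by rewrite rootE !hornerE Pw uqN subrr.
  have : root (minPoly F w) (z * w).
    rewrite (minPoly_Xn q0 wqF dq) rootE !hornerE exprMn (prim_expr_order pz).
    by rewrite mul1r subrr.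
  move/(root_dvdp dv); rewrite rootE !hornerE => /eqP.
  by move/subr0_eq.
have [r Dr] : {r : 'I_q | P.[z * w] / u = z ^+ r}.
  apply: prim_rootP => //; rewrite expr_div_n PzwN uqN divff //.
have PzwE : P.[z * w] = z ^+ r * u by rewrite -Dr mulfVK.
set D := \poly_(i < q) (P`_i * (z ^+ i - z ^+ r)).
have DF : D \is a polyOver F.
  apply/polyOver_poly => i _.
  by rewrite rpredM ?rpredB ?rpredX //; apply/polyOverP.
have D0 : D = 0.
  apply/eqP; rewrite -(@root_small_adjoin_poly _ _ _ w _ DF); last by rewrite dq size_poly.
  rewrite rootE /D horner_poly.
  have -> : \sum_(i < q) P`_i * (z ^+ i - z ^+ r) * w ^+ i =
            P.[z * w] - z ^+ r * P.[w].
    rewrite !(horner_coef_wide _ szP) mulr_sumr -sumrB.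
    by apply: eq_bigr => i _; rewrite exprMn; ring.
  by rewrite PzwE Pw subrr.
exists P`_r; first exact/polyOverP.
exists r; split => //.
rewrite -Pw (horner_coef_wide _ szP) (bigD1 r) //= big1 ?addr0 // => i /negbTE ir.
have := congr1 (fun p : {poly L} => p`_i) D0; rewrite /D coef_poly ltn_ord coef0 => /eqP.
rewrite mulf_eq0 subr_eq0 (eq_prim_root_expr pz) !modn_small ?ltn_ord //.
by rewrite (inj_eq val_inj) ir orbF => /eqP->; rewrite mul0r.
Qed.

End Kum1.

Lemma rat_root_logn (rho : rat) (q M p : nat) : (0 < q)%N -> (0 < M)%N -> prime p ->
  (rho ^+ q = M%:R)%R -> (q %| logn p M)%N.
Proof.
move=> q0 M0 pp E.
have Ez : (numq rho ^+ q = M%:Z * denq rho ^+ q)%R.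
  apply: (@intr_inj rat); rewrite rmorphXn rmorphM /= numqE exprMn E.
  by rewrite rmorphXn.
have En : (`|numq rho| ^ q = M * `|denq rho| ^ q)%N.
  by rewrite -abszX Ez abszM abszX.
have d0 : (0 < `|denq rho|)%N by rewrite absz_gt0 denq_neq0.
have n0 : (0 < `|numq rho|)%N.
  rewrite lt0n; apply/negP => /eqP n0.
  move: En; rewrite n0 exp0n // => /esym/eqP; rewrite muln_eq0 expn_eq0.
  by rewrite eqn0Ngt M0 eqn0Ngt d0.
have := congr1 (logn p) En.
rewrite lognX lognM ?expn_gt0 ?d0 // lognX => e.
have h : (q %| logn p M + q * logn p `|denq rho|)%N by rewrite -e dvdn_mulr.
by rewrite dvdn_addl ?dvdn_mulr in h.
Qed.

Section Kum2.
Local Open Scope ring_scope.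
Variables (L : fieldExtType rat) (q : nat) (z : L).
Hypotheses (pq : prime q) (pz : q.-primitive_root z).

Lemma natL_neq0 n : (0 < n)%N -> (n%:R : L) != 0.
Proof.
by move=> n0; rewrite -(rmorph_nat (in_alg L)) fmorph_eq0 pnatr_eq0 -lt0n.
Qed.

Lemma natL_inF (F : {subfield L}) n : (n%:R : L) \in F.
Proof. by rewrite rpredMn // mem1v. Qed.

Definition Cond (F : {subfield L}) (b : nat) :=
  forall N p : nat, (0 < N)%N -> prime p -> (b < p)%N -> ~~ (q %| logn p N)%N ->
  forall u, u \in F -> u ^+ q != N%:R.

Lemma z_neq1 : z != 1.
Proof.
apply/eqP => z1; have := prim_order_dvd pz 1; rewrite expr1 z1 eqxx.
by move/dvdn_leq => /(_ isT); rewrite leqNgt prime_gt1.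
Qed.

Lemma adeg_z_lt : (adjoin_degree 1%AS z < q)%N.
Proof.
have q1 := prime_gt1 pq.
set Phi := \poly_(i < q) (1 : L).
have PhiF : Phi \is a polyOver 1%VS by apply/polyOver_poly => i _; exact: mem1v.
have szPhi : size Phi = q by rewrite size_poly_eq // oner_eq0.
have rPhi : root Phi z.
  rewrite rootE /Phi horner_poly; under eq_bigr do rewrite mul1r.
  have := subrX1 z q; rewrite (prim_expr_order pz) subrr => /esym/eqP.
  by rewrite mulf_eq0 subr_eq0 (negbTE z_neq1).
have := dvdp_leq _ (minPoly_dvdp PhiF rPhi).
rewrite size_minPoly szPhi; apply; rewrite -size_poly_eq0 szPhi.
by rewrite -lt0n ltnW.
Qed.

Lemma Cond_base : Cond <<1; z>>%AS 0.
Proof.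
move=> N p N0 pp _ ndv u uB; apply/eqP => uq.
have q0 := prime_gt0 pq.
have u0 : u != 0.
  by apply: contra_neq (natL_neq0 N0) => u0; rewrite -uq u0 expr0n gtn_eqF.
have uq1 : u ^+ q \in (1%AS : {subfield L}) by rewrite uq natL_inF.
have [s Hs] := const_min pz u0 uq1.
set k := adjoin_degree 1%AS u in Hs.
have klt : (k < q)%N.
  apply: leq_ltn_trans adeg_z_lt.
  have := dimvS (_ : (<<1; u>> <= <<1; z>>)%VS).
  rewrite !dim_Fadjoin dimv1 !muln1; apply.
  by rewrite sub_adjoin1v.
have [rho Drho] := vlineP _ _ Hs.
have : rho ^+ q = (N ^ k)%:R.
  apply: (fmorph_inj (in_alg L)); rewrite rmorphXn /= scaler_nat natrX.
  rewrite -Drho exprMn -!exprM mulnC exprM.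
  by rewrite (prim_expr_order pz) expr1n mul1r mulnC exprM uq.
move/rat_root_logn => /(_ p q0 _ pp).
rewrite expn_gt0 N0 => /(_ isT).
rewrite lognX Gauss_dvdr ?(negbTE ndv) //.
rewrite prime_coprime //; apply/negP => /(dvdn_leq (isT : (0 < k)%N)).
by rewrite leqNgt klt.
Qed.


Lemma Cond_step (F : {subfield L}) b (w : L) (p : nat) : Cond F b -> z \in F ->
  prime p -> (b < p)%N -> w ^+ q = p%:R ->
  Cond <<F; w>>%AS p /\ \dim <<F; w>> = (q * \dim F)%N.
Proof.
move=> HC zF pp bp wq.
have q0 := prime_gt0 pq; have q1 := prime_gt1 pq; have p0 := prime_gt0 pp.
have w0 : w != 0.
  by apply: contra_neq (natL_neq0 p0) => w0; rewrite -wq w0 expr0n gtn_eqF.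
have wqF : w ^+ q \in F by rewrite wq natL_inF.
have nr : forall c, c \in F -> c ^+ q != w ^+ q.
  move=> c cF; rewrite wq; apply: (HC p p p0 pp bp _ c cF).
  by rewrite logn_prime // eqxx dvdn1 gtn_eqF.
have dq := adeg_q pq pz zF w0 wqF nr.
split; last by rewrite dim_Fadjoin dq.
move=> N p' N0 pp' ltp ndv u uFw; apply/eqP => uq.
have [c cF [r [ltr Du]]] :=
  kummer_step pq pz zF w0 wqF dq (natL_inF F N) (natL_neq0 N0) uFw uq.
have H1 : (0 < N * p ^ (q - r))%N by rewrite muln_gt0 N0 expn_gt0 p0.
have H2 : ~~ (q %| logn p' (N * p ^ (q - r)))%N.
  rewrite lognM ?expn_gt0 ?p0 // lognX (logn_prime _ pp).
  by rewrite gtn_eqF // muln0 addn0.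
have H3 : c * p%:R \in F by rewrite rpredM // natL_inF.
have := HC _ p' H1 pp' (ltn_trans bp ltp) H2 _ H3; apply/negP; apply/negPn/eqP.
rewrite natrM natrX -uq Du !exprMn -!exprM mulnC exprM wq.
by rewrite -mulrA -exprD subnKC // ltnW.
Qed.

Lemma kummer_exists : exists p, prime p /\ forall u : L, u ^+ q != p%:R.
Proof.
case: (classic (exists p, prime p /\ forall u : L, u ^+ q != p%:R)) => // H.
exfalso.
have allw : forall p, prime p -> exists w : L, w ^+ q = p%:R.
  move=> p pp; apply: NNPP => nw; apply: H; exists p; split => // u.
  by apply/eqP => e; apply: nw; exists u.
have ind : forall j, exists F : {subfield L}, exists b,
    [/\ Cond F b, z \in F & (2 ^ j <= \dim F)%N].
  elim=> [|j [F [b [HC zF dF]]]].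
    exists <<1; z>>%AS, 0%N; split; first exact: Cond_base.
      exact: memv_adjoin.
    by rewrite expn0 adim_gt0.
  have [p bp pp] := prime_above b; have [w wq] := allw p pp.
  have [C D] := Cond_step HC zF pp bp wq.
  exists <<F; w>>%AS, p; split => //; first exact: subvP_adjoin.
  by rewrite D expnS leq_mul // prime_gt1.
have [F [b [_ _ dF]]] := ind (\dim {:L}).
have := leq_trans dF (dimvS (subvf F)).
by rewrite leqNgt ltn_expl.
Qed.

End Kum2.

Section Ext.
Local Open Scope ring_scope.

Lemma irr_factor (F : fieldType) (f : {poly F}) : (1 < size f)%N ->
  exists g, irreducible_poly g /\ g %| f.
Proof.
have [n] := ubnP (size f); elim: n f => // n IH f ltf f1.
case: (classic (irreducible_poly f)) => [irr|nirr]; first by exists f.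
have [d [d1 df ndf]] : exists d : {poly F}, [/\ size d != 1%N, d %| f & ~~ (d %= f)].
  apply: NNPP => H; apply: nirr; split => // d d1 df.
  apply: NNPP => nd; apply: H; exists d; split => //; exact/negP.
have f0 : f != 0 by rewrite -size_poly_eq0 -lt0n ltnW.
have d0 : d != 0 by apply: contraTneq df => ->; rewrite dvd0p.
have szd : (size d < size f)%N.
  rewrite ltn_neqAle dvdp_leq // andbT.
  by rewrite (dvdp_size_eqp df).
have d1' : (1 < size d)%N.
  by rewrite ltn_neqAle eq_sym d1 lt0n size_poly_eq0 d0.
have [g [irr gd]] := IH d (leq_trans szd (ltnSE ltf)) d1'.
by exists g; split => //; apply: dvdp_trans gd df.
Qed.

Lemma ext_root (k : fieldType) (E : fieldExtType k) (f : {poly E}) :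
  (1 < size f)%N ->
  exists (E' : fieldExtType k) (phi : 'AHom(E, E')) (x : E'),
    root (map_poly phi f) x.
Proof.
move=> f1; have [g [irr gf]] := irr_factor f1.
have [Lz0 _ [x gx _]] := irredp_FAdjoin irr.
pose Lz : fieldExtType k := baseFieldType Lz0.
pose inLz : {rmorphism E -> Lz} := in_alg Lz0.
have inLzL_linear: linear (locked inLz).
  by move=> a u v; rewrite -[in LHS]mulr_algl rmorphD rmorphM -lock mulr_algl.
pose inLzLlM := GRing.isLinear.Build _ _ _ _ _ inLzL_linear.
pose inLzLL : {linear _ -> _} := HB.pack (locked inLz : _ -> _) inLzLlM.
have ihLzZ: ahom_in {:E} (linfun inLzLL).
  by apply/ahom_inP; split=> [u v|]; rewrite !lfunE (rmorphM, rmorph1).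
exists Lz, (AHom ihLzZ), x.
have -> : map_poly (AHom ihLzZ) f = map_poly inLz f.
  by apply: eq_map_poly => y; rewrite lfunE /= -lock.
apply: root_dvdp gx; rewrite dvdp_map //.
Qed.


Lemma natE_neq0 (K : fieldExtType rat) (E : fieldExtType K) n : (0 < n)%N ->
  (n%:R : E) != 0.
Proof.
move=> n0; rewrite -(rmorph_nat (in_alg E)) fmorph_eq0.
by rewrite -(rmorph_nat (in_alg K)) fmorph_eq0 pnatr_eq0 -lt0n.
Qed.

Lemma natE_inF (k : fieldType) (E : fieldExtType k) (F : {subfield E}) n :
  (n%:R : E) \in F.
Proof. by rewrite rpredMn // mem1v. Qed.

Lemma adeg_sub (k : fieldType) (E : fieldExtType k) (F1 F2 : {subfield E})
  (w : E) q : (F1 <= F2)%VS -> (0 < q)%N -> w ^+ q \in F1 ->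
  adjoin_degree F2 w = q -> adjoin_degree F1 w = q.
Proof.
move=> s12 q0 wq dq; apply/eqP; rewrite eqn_leq adeg_le //= -{1}dq.
have := dvdp_leq _ (minPolyS w s12).
by rewrite !size_minPoly ltnS; apply; rewrite monic_neq0 ?monic_minPoly.
Qed.

Lemma prim_from_root (k : fieldType) (E : fieldExtType k) (q : nat) (z : E) :
  prime q -> (q%:R : E) != 0 -> (\sum_(i < q) z ^+ i) = 0 -> q.-primitive_root z.
Proof.
move=> pq q0 Sz.
have zq : z ^+ q = 1 by apply/eqP; rewrite -subr_eq0 subrX1 Sz mulr0.
have z1 : z != 1.
  apply: contra_neq q0 => z1; rewrite -Sz z1.
  by under eq_bigr do rewrite expr1n; rewrite sumr_const card_ord.
have [m pm mq] := prim_order_exists (prime_gt0 pq) zq.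
case/primeP: (pq) => _ /(_ m mq) /orP[/eqP m1|/eqP <-] //.
by move: pm; rewrite m1 => /prim_expr_order; rewrite expr1 => /eqP; rewrite (negbTE z1).
Qed.

Lemma step_ext (K : fieldExtType rat) (E : fieldExtType K) (q : nat) :
  prime q -> exists (E' : fieldExtType K) (phi : 'AHom(E, E')) (w : E') (p : nat),
    w ^+ q = p%:R /\ adjoin_degree (phi @: {:E})%AS w = q.
Proof.
move=> pq; have q0 := prime_gt0 pq; have q1 := prime_gt1 pq.
set Phi := \poly_(i < q) (1 : E).
have szPhi : size Phi = q by rewrite size_poly_eq // oner_eq0.
have Phi1 : (1 < size Phi)%N by rewrite szPhi.
have [Ea [pa [z rz]]] := ext_root Phi1.
have pz : q.-primitive_root z.
  apply: prim_from_root => //; first exact: natE_neq0.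
  move: rz; have -> : map_poly pa Phi = \poly_(i < q) (1 : Ea).
    apply/polyP => i; rewrite coef_map !coef_poly.
    case: ifP => _; [exact: rmorph1 | exact: raddf0].
  by rewrite rootE horner_poly; under eq_bigr do rewrite mul1r; move/eqP.
have [p [pp np]] := kummer_exists (L := baseFieldType Ea) pq pz.
have p0 := prime_gt0 pp.
set f := 'X^q - ((p%:R : Ea))%:P.
have f1 : (1 < size f)%N by rewrite size_XnsubC.
have [Eb [pb [w rw]]] := ext_root f1.
have wq : w ^+ q = p%:R.
  move: rw; rewrite /f rmorphB /= map_polyXn map_polyC /= rmorph_nat.
  by rewrite rootE !hornerE subr_eq0 => /eqP.
set F := (pb @: {:Ea})%AS.
have zF : pb z \in F by rewrite memv_img ?memvf.
have pz' : q.-primitive_root (pb z) by rewrite fmorph_primitive_root.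
have w0 : w != 0.
  by apply: contra_neq (natE_neq0 Eb p0) => w0; rewrite -wq w0 expr0n gtn_eqF.
have wqF : w ^+ q \in F by rewrite wq natE_inF.
have nr : forall c, c \in F -> c ^+ q != w ^+ q.
  move=> c /memv_imgP[c0 _ ->]; rewrite wq -(rmorph_nat pb) -rmorphXn.
  rewrite (inj_eq (fmorph_inj pb)); exact: np.
have dq := adeg_q pq pz' zF w0 wqF nr.
exists Eb, (comp_ahom pb pa), w, p; split => //.
apply: (adeg_sub (F2 := F)) => //; last by rewrite wq natE_inF.
by rewrite /= limg_comp limgS // subvf.
Qed.


Lemma tower (K : fieldExtType rat) (qs : seq nat) : all prime qs ->
  forall (E : fieldExtType K), exists (E' : fieldExtType K) (phi : 'AHom(E, E'))
    (ws : seq E'), size ws = size qs /\ forall F : {subfield E'},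
    (F <= phi @: {:E})%VS -> forall m : bitseq,
    \dim <<F & mask m ws>> = (\prod_(q <- mask m qs) q * \dim F)%N.
Proof.
elim: qs => [|q qs IH] /=.
  move=> _ E; exists E, (id_ahom E), [::]; split => // F _ m.
  by rewrite mask0 Fadjoin_nil mask0 big_nil mul1n.
case/andP=> pq pqs E.
have [E1 [p1 [w [p [wq dq]]]]] := step_ext E pq.
have [E' [p' [ws [szws H']]]] := IH pqs E1.
exists E', (comp_ahom p' p1), (p' w :: ws); split; first by rewrite /= szws.
move=> F sF m.
have sF1 : (F <= p' @: {:E1})%VS.
  apply: subv_trans sF _; by rewrite [limg _]limg_comp limgS ?subvf.
case: m => [|[] m] /=; last exact: H'.
  by rewrite Fadjoin_nil big_nil mul1n.
rewrite adjoin_cons.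
have sF' : (<<F; p' w>>%AS <= p' @: {:E1})%VS.
  by apply/FadjoinP; split; last by rewrite memv_img ?memvf.
rewrite (H' _ sF') dim_Fadjoin big_cons.
have q0 := prime_gt0 pq.
have p'wq : p' w ^+ q = p%:R by rewrite -rmorphXn wq rmorph_nat.
have -> : adjoin_degree F (p' w) = q.
  apply: (adeg_sub (F2 := (p' @: (p1 @: {:E})%AS)%AS)) => //.
  - by move: sF; rewrite /= limg_comp.
  - by rewrite p'wq natE_inF.
  by rewrite adjoin_degree_aimg.
by rewrite mulnA [(_ * q)%N]mulnC.
Qed.


Lemma compositum (k : fieldType) (E : fieldExtType k) (A B : {subfield E})
  (xs ys zs : seq E) :
  {subset zs <= xs ++ ys} -> {subset xs <= zs} -> {subset ys <= zs} ->
  (<<A & xs>>%AS * <<B & ys>>%AS)%VS = <<(A * B)%AS & zs>>%VS.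
Proof.
move=> zxy xz yz; apply/eqP; rewrite eqEsubv; apply/andP; split.
  have sAT : (A <= <<(A * B)%AS & zs>>%AS)%VS.
    apply: subv_trans (field_subvMr A B) _; exact: (subv_adjoin_seq (A * B)%AS zs).
  have sBT : (B <= <<(A * B)%AS & zs>>%AS)%VS.
    apply: subv_trans (field_subvMl A B) _; exact: (subv_adjoin_seq (A * B)%AS zs).
  have s1 : (<<A & xs>>%AS <= <<(A * B)%AS & zs>>%AS)%VS.
    apply/Fadjoin_seqP; split => // x /xz; exact: seqv_sub_adjoin.
  have s2 : (<<B & ys>>%AS <= <<(A * B)%AS & zs>>%AS)%VS.
    apply/Fadjoin_seqP; split => // x /yz; exact: seqv_sub_adjoin.
  apply/prodvP => u v uL vL; apply: rpredM; [exact: (subvP s1) | exact: (subvP s2)].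
apply/(@Fadjoin_seqP _ _ _ _ (<<A & xs>>%AS * <<B & ys>>%AS)%AS); split.
  by apply: prodvS; apply: subv_adjoin_seq.
move=> x /zxy; rewrite mem_cat => /orP[xX|xY].
  by rewrite -[x]mulr1 memv_mul ?mem1v ?seqv_sub_adjoin.
by rewrite -[x]mul1r memv_mul ?mem1v ?seqv_sub_adjoin.
Qed.

End Ext.

Lemma prime_list n : (0 < n)%N -> exists qs, all prime qs /\ (\prod_(q <- qs) q)%N = n.
Proof.
have [N] := ubnP n; elim: N n => // N IH n ltn n0.
case: (ltngtP n 1) => [|n1|->]; first by rewrite ltnNge n0.
  have pp := pdiv_prime n1; have pd := pdiv_dvd n.
  have h1 : n %/ pdiv n < N.
    by apply: leq_trans (div.ltn_Pdiv (prime_gt1 pp) n0) _; rewrite -ltnS.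
  have h2 : 0 < n %/ pdiv n by rewrite divn_gt0 ?(prime_gt0 pp) // dvdn_leq.
  have [qs [aq eq]] := IH _ h1 h2.
  by exists (pdiv n :: qs); rewrite /= pp aq big_cons eq mulnC divnK.
by exists [::]; rewrite big_nil.
Qed.

Lemma dim_aimg (k : fieldType) (A B : fieldExtType k) (f : 'AHom(A, B)) (U : {vspace A}) :
  \dim (f @: U) = \dim U.
Proof. by rewrite limg_dim_eq // (eqP (AHom_lker0 f)) capv0. Qed.

Lemma CprimeP a b c : Cprime a b c <->
  exists s a1 b1, [/\ 0 < s, 0 < a1 & 0 < b1]%N /\ [/\ a = (s * a1)%N, b = (s * b1)%N & c = (s * a1 * b1)%N].
Proof.
split.
  case=> a0 b0 c0 [t [t0 tg ->]].
  have g0 : 0 < gcdn a b by rewrite gcdn_gt0 a0.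
  set g := gcdn a b in tg g0.
  have [s Dg] : exists s, g = (s * t)%N by exists (g %/ t); rewrite divnK.
  have s0 : 0 < s by move: g0; rewrite Dg muln_gt0 => /andP[].
  have sa : (s %| a)%N by apply: dvdn_trans (dvdn_gcdl a b); rewrite -/g Dg dvdn_mulr.
  have sb : (s %| b)%N by apply: dvdn_trans (dvdn_gcdr a b); rewrite -/g Dg dvdn_mulr.
  exists s, (a %/ s), (b %/ s); split; split => //.
  - by rewrite divn_gt0 // dvdn_leq.
  - by rewrite divn_gt0 // dvdn_leq.
  - by rewrite mulnC divnK.
  - by rewrite mulnC divnK.
  apply/eqP; rewrite -(eqn_pmul2r s0) -(eqn_pmul2r t0); apply/eqP.
  have e := muln_lcm_gcd a b; rewrite -/g Dg in e.
  set l := lcmn a b in e *; move: e.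
  rewrite -{1}(divnK sa) -{1}(divnK sb).
  set a1 := a %/ s; set b1 := b %/ s => e.
  have -> : (l * t * s * t = (l * (s * t)) * t)%N by ring.
  rewrite e; ring.
case=> s [a1 [b1 [[s0 a10 b10] [-> -> ->]]]]; split.
- by rewrite muln_gt0 s0.
- by rewrite muln_gt0 s0.
- by rewrite !muln_gt0 s0 a10.
exists (gcdn a1 b1); split.
- by rewrite gcdn_gt0 a10.
- by rewrite -muln_gcdr dvdn_mull.
by rewrite -muln_lcmr -[RHS]mulnA muln_lcm_gcd mulnA.
Qed.

Lemma part1 (K : fieldExtType rat) a b c a' b' c' :
  compositum_feasible K a' b' c' -> Cprime a b c ->
  compositum_feasible K (a * a') (b * b') (c * c').
Proof.
case=> E2 [L2 [L2' [dL dL' dLL]]].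
case/CprimeP => s [a1 [b1 [[s0 a10 b10] [-> -> ->]]]].
have [qs1 [pr1 e1]] := prime_list s0.
have [qs2 [pr2 e2]] := prime_list a10.
have [qs3 [pr3 e3]] := prime_list b10.
have prq : all prime (qs1 ++ qs2 ++ qs3) by rewrite !all_cat pr1 pr2 pr3.
have [E' [phi [ws [szws H]]]] := tower prq E2.
set n1 := size qs1; set n2 := size qs2; set n3 := size qs3.
have [ws1 [ws2 [ws3 [Dws [sz1 sz2 sz3]]]]] : exists ws1 ws2 ws3,
    ws = ws1 ++ ws2 ++ ws3 /\ [/\ size ws1 = n1, size ws2 = n2 & size ws3 = n3].
  exists (take n1 ws), (take n2 (drop n1 ws)), (drop n2 (drop n1 ws)).
  rewrite !cat_take_drop; split => //.
  have sz : size ws = n1 + (n2 + n3) by rewrite szws !size_cat.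
  split.
  - by rewrite size_takel // sz leq_addr.
  - by rewrite size_takel // size_drop sz addKn leq_addr.
  - by rewrite !size_drop sz addKn addKn.
set A := (phi @: L2)%AS; set B := (phi @: L2')%AS.
have sA : (A <= phi @: {:E2})%VS by rewrite limgS ?subvf.
have sB : (B <= phi @: {:E2})%VS by rewrite limgS ?subvf.
have sAB : ((A * B)%AS <= phi @: {:E2})%VS by rewrite /= -aimgM limgS ?subvf.
set m1 := nseq n1 true ++ nseq n2 true ++ nseq n3 false.
set m2 := nseq n1 true ++ nseq n2 false ++ nseq n3 true.
have Mws1 : mask m1 ws = ws1 ++ ws2.
  by rewrite Dws !mask_cat ?size_nseq ?sz1 ?sz2 // !mask_true ?sz1 ?sz2 // mask_false cats0.
have Mws2 : mask m2 ws = ws1 ++ ws3.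
  by rewrite Dws !mask_cat ?size_nseq ?sz1 ?sz2 // !mask_true ?sz1 ?sz3 // mask_false.
have Mqs1 : mask m1 (qs1 ++ qs2 ++ qs3) = qs1 ++ qs2.
  by rewrite !mask_cat ?size_nseq // !mask_true // mask_false cats0.
have Mqs2 : mask m2 (qs1 ++ qs2 ++ qs3) = qs1 ++ qs3.
  by rewrite !mask_cat ?size_nseq // !mask_true // mask_false.
exists E', <<A & mask m1 ws>>%AS, <<B & mask m2 ws>>%AS; split.
- by rewrite (H A sA) Mqs1 big_cat /= e1 e2 dim_aimg dL.
- by rewrite (H B sB) Mqs2 big_cat /= e1 e3 dim_aimg dL'.
rewrite /= (@compositum _ _ A B _ _ ws); first last.
- by move=> x; rewrite Mws2 Dws !mem_cat; case: (x \in ws1); case: (x \in ws2); case: (x \in ws3).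
- by move=> x; rewrite Mws1 Dws !mem_cat; case: (x \in ws1); case: (x \in ws2); case: (x \in ws3).
- by move=> x; rewrite Mws1 Mws2 Dws !mem_cat; case: (x \in ws1); case: (x \in ws2); case: (x \in ws3).
have := H _ sAB (nseq (size ws) true).
rewrite !mask_true ?szws // => ->.
by rewrite !big_cat /= e1 e2 e3 /= -aimgM dim_aimg dLL mulnA.
Qed.



Lemma feasible111 (K : fieldExtType rat) : compositum_feasible K 1 1 1.
Proof.
exists (K^o : fieldExtType K), 1%AS, 1%AS.
by rewrite /= prodv1 dimv1.
Qed.

Theorem mainTheorem11 (K : fieldExtType rat) :
  (forall a b c a' b' c' : nat,
      compositum_feasible K a b c -> compositum_feasible K a' b' c' ->
      Cprime a b c ->
      compositum_feasible K (a * a') (b * b') (c * c'))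
  /\ (forall a b c : nat, Cprime a b c -> compositum_feasible K a b c)
  /\ Cprime 1 1 1
  /\ (forall a b c a' b' c' : nat,
        Cprime a b c -> Cprime a' b' c' -> Cprime (a * a') (b * b') (c * c'))
  /\ (forall a b c n : nat, Cprime a b c -> Cprime (a ^ n) (b ^ n) (c ^ n)).
Proof.
have C111 : Cprime 1 1 1 by apply/CprimeP; exists 1, 1, 1.
have Cmul : forall a b c a' b' c' : nat,
    Cprime a b c -> Cprime a' b' c' -> Cprime (a * a') (b * b') (c * c').
  move=> a b c a' b' c' /CprimeP[s [a1 [b1 [[s0 a0 b0] [-> -> ->]]]]].
  move=> /CprimeP[s' [a1' [b1' [[s0' a0' b0'] [-> -> ->]]]]].
  apply/CprimeP; exists (s * s'), (a1 * a1'), (b1 * b1'); split.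
    by rewrite !muln_gt0 s0 s0' a0 a0' b0 b0'.
  by split; ring.
split; first by move=> a b c a' b' c' _; apply: part1.
split.
  move=> a b c Cabc; rewrite -[a]muln1 -[b]muln1 -[c]muln1.
  exact: part1 (feasible111 K) Cabc.
split => //; split => // a b c n Cabc.
elim: n => [|n IH]; first by rewrite !expn0.
by rewrite !expnS; apply: Cmul.
Qed.
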